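(* Let $m_2>m_1\ge1$ be integers and consider tilings with $(\frac12,\frac12;m_1)$- and $(\frac12,\frac12;m_2)$-combs. The mixed metatiles occur in pairs, whereby one element of the pair is generated from the other by interchanging the contents of the two slots in each cell; that is, this interchange operation maps every mixed metatile of length $l$ to a mixed metatile of length $l$ that is different from it.
   Context: An $n$-board is the strip $[0,n]\times[0,1]$ divided into unit cells $[k-1,k]\times[0,1]$, $k=1,\dots,n$; each cell consists of a left slot $[k-1,k-\frac12]\times[0,1]$ and a right slot $[k-\frac12,k]\times[0,1]$. A $(w,g;t)$-comb is a tile consisting of a row of $t$ rectangles (teeth) of size $w\times1$, consecutive teeth separated by a gap of width $g$; gaps are not part of the tile and may be occupied by other tiles. A tiling is a placement of translated (unrotated) combs whose teeth cover the board exactly without overlap. Given a tiling of an $n$-board, an integer $x$ with $0<x<n$ is a cut point if every comb has all of its teeth in $[0,x]$ or all in $[x,n]$. A metatile of length $l$ is a tiling of an $l$-board with no cut point (every tiling splits uniquely at its cut points into a sequence of metatiles). A metatile is mixed if it contains combs of more than one type. *)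

(* Defs.v *)
From mathcomp Require Import all_boot.
Set Implicit Arguments. Unset Strict Implicit. Unset Printing Implicit Defensive.

(* Slots of an n-board are indexed by k < 2n (half-units): slot k is
   [k/2, (k+1)/2] x [0,1]; slot 2j is the left slot and slot 2j+1 the right
   slot of cell j+1.  A (1/2,1/2;t)-comb is a pair (s, t): its teeth are the
   width-1/2 rectangles occupying slots s, s+2, ..., s+2(t-1) (tooth width 1/2,
   gap 1/2, so consecutive teeth start one unit apart). *)
Definition comb := (nat * nat)%type.

Definition comb_start (c : comb) : nat := c.1.
Definition comb_teeth (c : comb) : nat := c.2.

Definition comb_slots (c : comb) : seq nat :=
  [seq comb_start c + 2 * i | i <- iota 0 (comb_teeth c)].

Definition is_tiling (m1 m2 n : nat) (T : seq comb) : Prop :=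
  [/\ forall c, c \in T -> comb_teeth c = m1 \/ comb_teeth c = m2,
      forall c k, c \in T -> k \in comb_slots c -> k < 2 * n
    & forall k, k < 2 * n -> count (fun c => k \in comb_slots c) T = 1].

Definition is_cut_point (n : nat) (T : seq comb) (x : nat) : Prop :=
  0 < x < n /\
  forall c, c \in T ->
    (forall k, k \in comb_slots c -> k < 2 * x) \/
    (forall k, k \in comb_slots c -> 2 * x <= k).

Definition is_metatile (m1 m2 l : nat) (T : seq comb) : Prop :=
  is_tiling m1 m2 l T /\ forall x, ~ is_cut_point l T x.

Definition is_mixed (T : seq comb) : Prop :=
  exists c1 c2, [/\ c1 \in T, c2 \in T & comb_teeth c1 <> comb_teeth c2].

Definition swap_slot (k : nat) : nat := if odd k then k.-1 else k.+1.
Definition swap_comb (c : comb) : comb := (swap_slot c.1, c.2).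
Definition swap_tiling (T : seq comb) : seq comb := map swap_comb T.

(* Main.v *)
Require Import Defs.
From mathcomp Require Import all_boot.
From mathcomp Require Import zify.

Set Implicit Arguments. Unset Strict Implicit. Unset Printing Implicit Defensive.

Lemma swap_slot_spec k : exists q,
  (k = 2 * q /\ swap_slot k = 2 * q + 1) \/ (k = 2 * q + 1 /\ swap_slot k = 2 * q).
Proof.
have := odd_double_half k; rewrite /swap_slot -mul2n.
case: (odd k) => /= h; exists k./2; [right|left]; lia.
Qed.

Lemma swap_slotK : involutive swap_slot.
Proof.
move=> k; have [q [[e1 e2]|[e1 e2]]] := swap_slot_spec k; rewrite e2;
  have [p [[f1 f2]|[f1 f2]]] := swap_slot_spec (2 * q + 1);
  have [p' [[g1 g2]|[g1 g2]]] := swap_slot_spec (2 * q); lia.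
Qed.

Lemma swap_slot_lt k x : (swap_slot k < 2 * x) = (k < 2 * x).
Proof.
have [q [[e1 e2]|[e1 e2]]] := swap_slot_spec k; rewrite e2 e1;
apply/idP/idP; lia.
Qed.

Lemma swap_slot_add s i : swap_slot (s + 2 * i) = swap_slot s + 2 * i.
Proof.
have [q [[e1 e2]|[e1 e2]]] := swap_slot_spec s; rewrite e2 e1;
have [p [[f1 f2]|[f1 f2]]] := swap_slot_spec (2 * q + 2 * i);
have [p' [[g1 g2]|[g1 g2]]] := swap_slot_spec (2 * q + 1 + 2 * i); lia.
Qed.

Lemma slots_swap c : comb_slots (swap_comb c) = map swap_slot (comb_slots c).
Proof.
rewrite /comb_slots -map_comp; apply: eq_map => i /=.
by rewrite swap_slot_add.
Qed.

Lemma mem_slots_swap c k :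
  (k \in comb_slots (swap_comb c)) = (swap_slot k \in comb_slots c).
Proof.
rewrite slots_swap -{1}(swap_slotK k) mem_map //.
exact: (can_inj swap_slotK).
Qed.

Lemma swap_combK : involutive swap_comb.
Proof. by case=> s t; rewrite /swap_comb /= swap_slotK. Qed.

Lemma mem_swap_tiling T c : (c \in swap_tiling T) = (swap_comb c \in T).
Proof.
rewrite /swap_tiling -{1}(swap_combK c) mem_map //.
exact: (can_inj swap_combK).
Qed.

Lemma slotsP a t k :
  reflect (exists2 i, i < t & k = a + 2 * i) (k \in comb_slots (a, t)).
Proof.
apply: (iffP mapP) => [[i]|[i]].
  by rewrite mem_iota /= => hi ->; exists i; lia.
move=> hi ->; exists i => //; by rewrite mem_iota /= add0n.
Qed.

Lemma count2 (X : eqType) (p : pred X) s x y :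
  x \in s -> y \in s -> x != y -> p x -> p y -> 1 < count p s.
Proof.
elim: s => //= a s IH; rewrite !inE => /orP[/eqP->|xs] /orP[/eqP->|ys] nxy px py.
- by rewrite eqxx in nxy.
- rewrite px add1n ltnS -has_count; apply/hasP; by exists y.
- rewrite py add1n ltnS -has_count; apply/hasP; by exists x.
- by have := IH xs ys nxy px py; lia.
Qed.

Lemma swap_metatile m1 m2 l T :
  is_metatile m1 m2 l T -> is_metatile m1 m2 l (swap_tiling T).
Proof.
move=> [[Ht Hb Hc] Hcut]; split; first split.
- by move=> c; rewrite mem_swap_tiling => /Ht.
- move=> c k; rewrite mem_swap_tiling => cT kc; rewrite -swap_slot_lt; apply: (Hb _ _ cT).
  by rewrite -mem_slots_swap swap_combK.
- move=> k hk; rewrite /swap_tiling count_map.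
  rewrite -(Hc (swap_slot k)); last by rewrite swap_slot_lt.
  by apply: eq_count => c /=; rewrite mem_slots_swap.
- move=> x [hx Hx]; apply: (Hcut x); split => // c cT.
  have : swap_comb c \in swap_tiling T by apply: map_f.
  move/Hx => [H|H]; [left|right] => k kc.
  + rewrite -swap_slot_lt; apply: H; by rewrite mem_slots_swap swap_slotK.
  + have := H (swap_slot k); rewrite mem_slots_swap swap_slotK => /(_ kc).
    have [q [[e1 e2]|[e1 e2]]] := swap_slot_spec k; rewrite e2 e1; lia.
Qed.

Lemma swap_mixed T : is_mixed T -> is_mixed (swap_tiling T).
Proof.
move=> [c1 [c2 [h1 h2 h3]]]; exists (swap_comb c1), (swap_comb c2); split.
- exact: map_f.
- exact: map_f.
- by case: c1 h1 h3; case: c2 h2.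
Qed.

Ltac clia := repeat match goal with
  | H : is_true (_ \in _) |- _ => clear H
  | H : is_true (_ != _) |- _ => clear H
  | H : _ <> _ |- _ => clear H
  end; lia.

Lemma not_inv m1 m2 l T : 1 <= m1 -> m1 < m2 ->
  is_metatile m1 m2 l T -> is_mixed T -> ~ (swap_tiling T =i T).
Proof.
move=> h1 h12 [[Ht Hb Hc] Hcut] [c1 [c2 [c1T c2T hne]]] Heq.
have sc1T : swap_comb c1 \in T by rewrite -Heq; apply: map_f.
have tpos : forall c, c \in T -> 0 < comb_teeth c by move=> c /Ht [->|->]; clia.
case: c1 c1T sc1T hne => s t c1T sc1T hne.
have t0 : 0 < t := tpos _ c1T.
have [q [AT BT nA nB]] : exists q, [/\ (2*q, t) \in T, (2*q+1, t) \in T,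
    c2 != (2*q,t) & c2 != (2*q+1,t)].
  have [q [[e1 e2]|[e1 e2]]] := swap_slot_spec s; exists q;
    rewrite /swap_comb /= e2 in sc1T; rewrite e1 in c1T hne;
    split => //; apply/eqP => E; rewrite E /= in hne; by apply: hne.
set A := (2*q, t) in AT nA; set B := (2*q+1, t) in BT nB.
have inA : forall i, i < t -> 2*q + 2*i \in comb_slots A.
  by move=> i hi; apply/slotsP; exists i.
have inB : forall i, i < t -> 2*q + 1 + 2*i \in comb_slots B.
  by move=> i hi; apply/slotsP; exists i.
have key : forall c, c \in T -> c != A -> c != B -> forall k : nat,
    k \in comb_slots c -> 2*q <= k -> k < 2*q + 2*t -> False.
  move=> c cT cA cB k kc hk1 hk2.
  have hk : k < 2*l by exact: Hb _ _ cT kc.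
  have := Hc k hk.
  have [p [[e1 _]|[e1 _]]] := swap_slot_spec k.
  - have kA : k \in comb_slots A by rewrite e1; apply/slotsP; exists (p - q); clear -e1 hk1 hk2; clia.
    have := count2 (p := fun c : comb => k \in comb_slots c) cT AT cA kc kA => HH E; by rewrite E in HH.
  - have kB : k \in comb_slots B by rewrite e1; apply/slotsP; exists (p - q); clear -e1 hk1 hk2; clia.
    have := count2 (p := fun c : comb => k \in comb_slots c) cT BT cB kc kB => HH2 E; by rewrite E in HH2.
have side : forall c, c \in T -> c != A -> c != B ->
    (forall k : nat, k \in comb_slots c -> k < 2*q) \/
    (forall k : nat, k \in comb_slots c -> 2*q + 2*t <= k).
  case=> s' t' cT cA cB.
  case: (ltnP s' (2*q)) => hs.
  - left => k /slotsP [i hi ->].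
    elim: i hi => [|i IH] hi; first by rewrite muln0 addn0.
    have h := IH (ltnW hi).
    case: (ltnP (s' + 2*i.+1) (2*q)) => // h2.
    exfalso; apply: (key _ cT cA cB (s' + 2 * i.+1)); last by clia.
      by apply/slotsP; exists i.+1.
    clia.
  - case: (ltnP s' (2*q+2*t)) => hs2.
    + case: t' cT cA cB => [|t'] cT cA cB.
        by left => k /slotsP [i hi]; clia.
      exfalso; apply: (key _ cT cA cB s') => //.
      by apply/slotsP; exists 0 => //; clia.
    + by right => k /slotsP [i hi ->]; clia.
have Aslots : forall k : nat, k \in comb_slots A -> 2*q <= k < 2*q+2*t.
  by move=> k /slotsP [i hi ->]; clia.
have Bslots : forall k : nat, k \in comb_slots B -> 2*q <= k < 2*q+2*t.
  by move=> k /slotsP [i hi ->]; clia.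
clear hne; case: c2 c2T nA nB => s2 t2 c2T nA nB.
have t2pos := tpos _ c2T.
have s2in : s2 \in comb_slots (s2,t2) by apply/slotsP; exists 0 => //; clia.
have s2l : s2 < 2*l := Hb _ _ c2T s2in.
have ql : q < l by have := Hb _ _ AT (inA 0 t0); clia.
have [hq|hq] : 0 < q \/ q + t < l.
  by case: (side _ c2T nA nB) => H; have := H _ s2in; clia.
- apply: (Hcut q); split; first clia.
  move=> c cT; case: (eqVneq c A) => [->|cA].
    by right => k /Aslots; clia.
  case: (eqVneq c B) => [->|cB].
    by right => k /Bslots; clia.
  by case: (side _ cT cA cB) => H; [left|right] => k /H; clia.
- apply: (Hcut (q + t)); split; first clia.
  move=> c cT; case: (eqVneq c A) => [->|cA].
    by left => k /Aslots; clia.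
  case: (eqVneq c B) => [->|cB].
    by left => k /Bslots; clia.
  by case: (side _ cT cA cB) => H; [left|right] => k /H; clia.
Qed.

Theorem lemma1 (m1 m2 : nat) (h1 : 1 <= m1) (h12 : m1 < m2)
    (l : nat) (T : seq comb) :
  is_metatile m1 m2 l T -> is_mixed T ->
  [/\ is_metatile m1 m2 l (swap_tiling T),
      is_mixed (swap_tiling T)
    & ~ (swap_tiling T =i T)].
Proof.
move=> HT HM; split; [exact: swap_metatile | exact: swap_mixed | exact: not_inv HT HM].
Qed.
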